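(* Fix a finite complete graph $K$, a vertex $x\in V(K)$, an edge probability measure $\mu$ on $E(K)$, and an integer $m\ge 2$. Then \[ \sum_{\substack{P\in\mathrm{cp}(K,P_{m+1}),\\ \deg_P(x)=1}}\mu(P)\le\bar\mu(x)\Bigl(\frac{1-\bar\mu(x)}{m-1}\Bigr)^{m-1}. \]
   Context: $P_{m+1}$ is the path on $m+1$ vertices; $\mathrm{cp}(K,P_{m+1})$ is the set of subgraphs of $K$ isomorphic to $P_{m+1}$. An edge probability measure on $K$ is a probability measure $\mu$ on $E(K)$; for a subgraph $H\subseteq K$, $\mu(H)=\prod_{e\in E(H)}\mu(e)$; and $\bar\mu(x)=\sum_{y\in V(K)\setminus\{x\}}\mu(xy)$. *)

(* Defs.v *)
From mathcomp Require Import all_boot all_order all_algebra.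
Set Implicit Arguments. Unset Strict Implicit. Unset Printing Implicit Defensive.
Import Order.TTheory GRing.Theory Num.Theory.
Local Open Scope ring_scope.

(* The complete graph K on a finite vertex type V: its edges are the
   2-element subsets of V. A subgraph is identified with its edge set
   (a copy of a path P_{m+1}, m >= 1, has no isolated vertex, so its
   vertex set is determined by its edges). *)
Section Defs.
Variable V : finType.

Definition is_edge (e : {set V}) : bool := #|e| == 2.

Definition path_edges (s : seq V) : {set {set V}} :=
  [set e in [seq [set p.1; p.2] | p <- zip s (behead s)]].

Definition is_path_copy (m : nat) (E : {set {set V}}) : bool :=
  [exists t : (m.+1).-tuple V, uniq t && (E == path_edges t)].

Definition deg_in (E : {set {set V}}) (x : V) : nat :=
  #|[set e in E | x \in e]|.

Variable R : realFieldType.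

Definition edge_prob_measure (mu : {set V} -> R) : Prop :=
  (forall e, is_edge e -> 0 <= mu e) /\ \sum_(e | is_edge e) mu e = 1.

Definition mu_sub (mu : {set V} -> R) (E : {set {set V}}) : R :=
  \prod_(e in E) mu e.

Definition mubar (mu : {set V} -> R) (x : V) : R :=
  \sum_(y | y != x) mu [set x; y].

End Defs.

(* Main.v *)
Require Import Defs.
From mathcomp Require Import all_boot all_order all_algebra.
Set Implicit Arguments. Unset Strict Implicit. Unset Printing Implicit Defensive.
Import Order.TTheory GRing.Theory Num.Theory.
Local Open Scope ring_scope.

Definition pe {V : finType} (s : seq V) : seq {set V} :=
  [seq [set p.1; p.2] | p <- zip s (behead s)].
Arguments pe : simpl never.

Lemma path_edgesE (V : finType) (s : seq V) : path_edges s = [set e in pe s].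
Proof. by []. Qed.

Lemma pe0 (V : finType) : pe ([::] : seq V) = [::]. Proof. by []. Qed.
Lemma pe1 (V : finType) (a : V) : pe [:: a] = [::]. Proof. by []. Qed.
Lemma pe_cons2 (V : finType) (a b : V) s :
  pe (a :: b :: s) = [set a; b] :: pe (b :: s).
Proof. by []. Qed.

Lemma pe_mem (V : finType) (s : seq V) e y : e \in pe s -> y \in e -> y \in s.
Proof.
elim: s => [|a s IH]; first by rewrite pe0.
case: s IH => [|b s] IH; first by rewrite pe1.
rewrite pe_cons2 inE => /orP [/eqP -> | He].
  by case/set2P => ->; rewrite !inE eqxx ?orbT.
by move=> Hy; rewrite inE (IH He Hy) orbT.
Qed.

Lemma pe_uniq (V : finType) (s : seq V) : uniq s -> uniq (pe s).
Proof.
elim: s => [|a s IH]; first by rewrite pe0.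
case: s IH => [|b s] IH; first by rewrite pe1.
move=> /andP [Ha Hu]; rewrite pe_cons2 /= IH // andbT.
apply/negP => H; have := pe_mem H (set21 a b); by rewrite (negbTE Ha).
Qed.

Lemma pe_edge (V : finType) (s : seq V) e : uniq s -> e \in pe s -> is_edge e.
Proof.
elim: s => [|a s IH]; first by rewrite pe0.
case: s IH => [|b s] IH; first by rewrite pe1.
move=> /andP [Ha Hu]; rewrite pe_cons2 inE => /orP [/eqP -> | He].
  rewrite /is_edge cards2; have : a != b by apply: contra Ha => /eqP ->; rewrite inE eqxx.
  by move=> ->.
exact: IH.
Qed.

Lemma pe_cat (V : finType) (a : V) s1 b s2 :
  pe (a :: s1 ++ b :: s2) = pe (a :: s1) ++ [set last a s1; b] :: pe (b :: s2).
Proof.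
elim: s1 a => [|c s1 IH] a; first by [].
by rewrite cat_cons !pe_cons2 IH.
Qed.

Lemma pe_rev (V : finType) (s : seq V) e : (e \in pe (rev s)) = (e \in pe s).
Proof.
elim: s => [|a s IH] //.
case: s IH => [|b s] IH //.
rewrite rev_cons; case Hr: (rev (b :: s)) => [|c u].
  by move: (congr1 size Hr); rewrite size_rev.
have Hl : last c u = b.
  by rewrite -[last c u]/(last c (c :: u)) -Hr rev_cons last_rcons.
rewrite -cats1 cat_cons pe_cat pe1 mem_cat inE orbC -Hr IH pe_cons2 inE Hl setUC.
by [].
Qed.

Fixpoint paths {V : finType} (k : nat) (A : {set V}) : seq (seq V) :=
  match k with
  | 0 => [:: [::]]
  | k'.+1 => flatten [seq [seq a :: s | s <- paths k' (A :\ a)] | a <- enum A]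
  end.

Lemma paths_sound (V : finType) k (A : {set V}) s :
  s \in paths k A -> [/\ size s = k, uniq s & {subset s <= A}].
Proof.
elim: k A s => [|k IH] A s /=.
  by rewrite inE => /eqP ->.
move/flatten_mapP => [a Ha /mapP [s' Hs' ->]].
have [Hsz Hu Hsub] := IH _ _ Hs'.
rewrite mem_enum in Ha.
split => //=; first by rewrite Hsz.
  rewrite Hu andbT; apply/negP => /Hsub; by rewrite setD11.
move=> y; rewrite inE => /orP [/eqP -> // | /Hsub]; by rewrite in_setD1 => /andP [].
Qed.

Lemma paths_complete (V : finType) k (A : {set V}) s :
  size s = k -> uniq s -> {subset s <= A} -> s \in paths k A.
Proof.
elim: k A s => [|k IH] A [|a s] //=.
move=> [Hsz] /andP [Ha Hu] Hsub.
apply/flatten_mapP; exists a; first by rewrite mem_enum; apply: Hsub; exact: mem_head.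
apply: map_f; apply: IH => // y Hy.
rewrite in_setD1.
have -> : y \in A by apply: Hsub; rewrite inE Hy orbT.
rewrite andbT.
by apply: contra Ha => /eqP <-.
Qed.

Lemma surj (V : finType) (x : V) m E :
  is_path_copy m E -> deg_in E x == 1%N ->
  exists2 s, s \in paths m ([set: V] :\ x) & path_edges (x :: s) = E.
Proof.
case/existsP => t /andP [Hu /eqP HE] Hdeg.
have Hsz := size_tuple t.
move: (tval t) Hsz Hu HE => ts Hsz Hu HE.
have Hx : x \in ts.
  have : (0 < #|[set e in E | x \in e]|)%N by move: (eqP Hdeg); rewrite /deg_in => ->.
  case/card_gt0P => e; rewrite inE => /andP [HeE Hxe].
  by move: HeE; rewrite HE path_edgesE inE => /pe_mem; apply.
case/splitPr: Hx Hsz Hu HE => t1 t2.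
case: t1 => [|a t1].
  rewrite /= => -[Hsz] /andP [Hx Hu] HE; exists t2 => //.
  apply: paths_complete => // y Hy; rewrite in_setD1 in_setT andbT.
  by apply: contra Hx => /eqP <-.
case: t2 => [|b t2].
  rewrite cats1 size_rcons => -[Hsz]; rewrite rcons_uniq => /andP [Hx Hu] HE.
  exists (rev (a :: t1)).
    apply: paths_complete; first by rewrite size_rev.
      by rewrite rev_uniq.
    move=> y; rewrite mem_rev => Hy; rewrite in_setD1 in_setT andbT.
    by apply: contra Hx => /eqP <-.
  rewrite HE !path_edgesE; apply/setP => e; rewrite !inE -rev_rcons pe_rev.
  by [].
move=> _ Hu HE; exfalso.
have Hdis : forall y, y \in a :: t1 -> y \in x :: b :: t2 -> False.
  move: Hu; rewrite cat_uniq => /and3P [_ /hasPn H _] y H1 H2.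
  by move: (H y H2); rewrite H1.
set p := last a t1.
have Hp : p \in a :: t1 by exact: mem_last.
have H1 : [set p; x] \in E.
  by rewrite HE path_edgesE inE cat_cons pe_cat mem_cat inE eqxx orbT.
have H2 : [set x; b] \in E.
  by rewrite HE path_edgesE inE cat_cons pe_cat mem_cat inE pe_cons2 inE eqxx !orbT.
have Hne : [set p; x] != [set x; b].
  apply/negP => /eqP Heq.
  have : p \in [set x; b] by rewrite -Heq set21.
  case/set2P => Hpe.
    by apply: (Hdis p Hp); rewrite Hpe mem_head.
  by apply: (Hdis p Hp); rewrite Hpe !inE eqxx orbT.
have : (2 <= #|[set e in E | x \in e]|)%N.
  rewrite -[2%N]/((true : nat).+1) -Hne -cards2; apply: subset_leq_card.
  apply/subsetP => e; case/set2P => ->; rewrite inE ?H1 ?H2 ?set22 ?set21 //.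
by move: (eqP Hdeg); rewrite /deg_in => ->.
Qed.
Lemma amgm (R : realFieldType) (D a : R) k : 0 <= D -> 0 <= a ->
  D * a ^+ k <= ((D + a *+ k) / k.+1%:R) ^+ k.+1.
Proof.
move=> HD Ha.
pose E := fun i : 'I_k.+1 => if i == ord0 then D else a.
have H0 : {in predT, forall i, 0 <= E i} by move=> i _; rewrite /E; case: ifP.
have [H _] := leif_AGM H0.
move: H. rewrite card_ord.
rewrite (eq_bigl xpredT) // [X in _ <= (X / _) ^+ _](eq_bigl xpredT) //.
rewrite big_ord_recl [X in _ <= (X / _) ^+ _]big_ord_recl /E eqxx.
have Hl : forall i : 'I_k, (lift ord0 i == ord0) = false.
  by move=> i; rewrite eq_sym (negbTE (neq_lift _ _)).
rewrite (eq_bigr (fun=> a)) // (eq_bigr (fun=> a)) //.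
by rewrite prodr_const sumr_const card_ord.
Qed.

Definition G (R : realFieldType) (V : finType) (mu : {set V} -> R) k (A : {set V}) (v : V) :=
  \sum_(s <- paths k A) \prod_(e <- pe (v :: s)) mu e.
Definition dd (R : realFieldType) (V : finType) (mu : {set V} -> R) (A : {set V}) v :=
  \sum_(a in A) mu [set v; a].
Definition WW (R : realFieldType) (V : finType) (mu : {set V} -> R) (A : {set V}) :=
  \sum_(e : {set V} | is_edge e && (e \subset A)) mu e.

Lemma G_rec (R : realFieldType) (V : finType) (mu : {set V} -> R) k (A : {set V}) v :
  G mu k.+1 A v = \sum_(a in A) mu [set v; a] * G mu k (A :\ a) a.
Proof.
rewrite /G /= big_flatten /= big_map -big_enum /=.
apply: eq_bigr => a _.
rewrite big_map mulr_sumr; apply: eq_bigr => s _.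
by rewrite pe_cons2 big_cons.
Qed.

Lemma split_W (R : realFieldType) (V : finType) (mu : {set V} -> R) (A : {set V}) a :
  a \in A -> WW mu A = dd mu (A :\ a) a + WW mu (A :\ a).
Proof.
move=> Ha; rewrite /WW (bigID (fun e : {set V} => a \in e)) /=; congr (_ + _).
  rewrite /dd -(big_imset mu (h := fun b => [set a; b]) (A := A :\ a)) /=.
    apply: eq_bigl => e; apply/idP/imsetP.
      move=> /andP [/andP [He Hsub] Hae].
      case/cards2P: He => p [q [Hpq Heq]]; subst e.
      move: Hae; case/set2P => Hap; subst a.
        exists q => //; rewrite in_setD1 (subsetP Hsub) ?set22 // andbT.
        by rewrite eq_sym.
      exists p; last by rewrite setUC.
      by rewrite in_setD1 (subsetP Hsub) ?set21 // andbT.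
    move=> [b Hb ->]; move: Hb; rewrite in_setD1 => /andP [Hba HbA].
    rewrite /is_edge cards2 (eq_sym a b) Hba /= set21 andbT.
    by apply/subsetP => y /set2P [->|->].
  move=> b b' Hb Hb' /= Heq.
  have : b \in [set a; b'] by rewrite -Heq set22.
  case/set2P => // Hba; move: Hb; by rewrite in_setD1 Hba eqxx.
by apply: eq_bigl => e; rewrite subsetD1 andbA.
Qed.

Lemma WW_ge0 (R : realFieldType) (V : finType) (mu : {set V} -> R) (A : {set V}) :
  (forall e, is_edge e -> 0 <= mu e) -> 0 <= WW mu A.
Proof. by move=> Hmu; apply: sumr_ge0 => e /andP [He _]; apply: Hmu. Qed.

Lemma edge2 (V : finType) (v a : V) : v != a -> is_edge [set v; a].
Proof. by move=> H; rewrite /is_edge cards2 H. Qed.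

Lemma dd_ge0 (R : realFieldType) (V : finType) (mu : {set V} -> R) (A : {set V}) v :
  (forall e, is_edge e -> 0 <= mu e) -> v \notin A -> 0 <= dd mu A v.
Proof.
move=> Hmu Hv; apply: sumr_ge0 => a Ha; apply: Hmu; apply: edge2.
by apply: contraNneq Hv => ->.
Qed.

Lemma G_step_of (R : realFieldType) (V : finType) (mu : {set V} -> R) k :
  (forall e, is_edge e -> 0 <= mu e) ->
  (forall (A : {set V}) v, v \notin A -> G mu k A v <= ((dd mu A v + WW mu A) / k%:R) ^+ k) ->
  forall (A : {set V}) v, v \notin A -> G mu k.+1 A v <= dd mu A v * (WW mu A / k%:R) ^+ k.
Proof.
move=> Hmu IH A v Hv; rewrite G_rec /dd mulr_suml.
apply: ler_sum => a Ha; apply: ler_wpM2l.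
  by apply: Hmu; apply: edge2; apply: contraNneq Hv => ->.
rewrite (split_W mu Ha); apply: IH; by rewrite setD11.
Qed.

Lemma G_bound (R : realFieldType) (V : finType) (mu : {set V} -> R) :
  (forall e, is_edge e -> 0 <= mu e) ->
  forall k (A : {set V}) v, v \notin A -> G mu k A v <= ((dd mu A v + WW mu A) / k%:R) ^+ k.
Proof.
move=> Hmu; elim => [|k IH] A v Hv.
  by rewrite /G /= big_seq1 pe1 big_nil expr0.
apply: le_trans (G_step_of Hmu IH Hv) _.
case: k {IH} => [|k].
  by rewrite !expr0 mulr1 expr1 divr1 lerDl WW_ge0.
have := amgm k.+1 (dd_ge0 Hmu Hv) (divr_ge0 (WW_ge0 A Hmu) (ler0n R k.+1)).
by rewrite -[WW mu A / _ *+ _]mulr_natr divfK // pnatr_eq0.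
Qed.

Lemma fiber (R : realFieldType) (T : finType) (U : eqType) (S : pred T)
    (f : T -> R) (g : U -> T) (P : seq U) :
  (forall s, s \in P -> 0 <= f (g s)) ->
  (forall E, S E -> exists2 s, s \in P & g s = E) ->
  \sum_(E | S E) f E <= \sum_(s <- P) f (g s).
Proof.
move=> Hnn Hsurj.
apply: (@le_trans _ _ (\sum_(E | S E) \sum_(s <- P) (g s == E)%:R * f (g s))).
  apply: ler_sum => E HE; have [s0 Hs0 Hg] := Hsurj E HE.
  rewrite (perm_big _ (perm_to_rem Hs0)) big_cons Hg eqxx mul1r lerDl.
  rewrite big_seq; apply: sumr_ge0 => s /mem_rem Hs.
  by apply: mulr_ge0; [exact: ler0n | exact: Hnn].
rewrite exchange_big /= [X in _ <= X]big_seq [X in X <= _]big_seq.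
apply: ler_sum => s Hs.
apply: (@le_trans _ _ (\sum_E (g s == E)%:R * f (g s))).
  rewrite [X in _ <= X](bigID S) /= lerDl; apply: sumr_ge0 => E _.
  by apply: mulr_ge0; [exact: ler0n | exact: Hnn].
rewrite (bigD1 (g s)) //= eqxx mul1r big1 ?addr0 // => E HE.
by rewrite eq_sym (negbTE HE) mul0r.
Qed.

Theorem proposition4p4 (R : realFieldType) (V : finType) (x : V)
    (mu : {set V} -> R) (m : nat) :
  edge_prob_measure mu -> (2 <= m)%N ->
  \sum_(E : {set {set V}} | is_path_copy m E && (deg_in E x == 1%N))
      mu_sub mu E
  <= mubar mu x * ((1 - mubar mu x) / (m.-1)%:R) ^+ m.-1.
Proof.
move=> [Hmu Hsum] Hm.
set A := [set: V] :\ x.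
have HxA : x \notin A by rewrite setD11.
have Hux : forall s, s \in paths m A -> uniq (x :: s).
  move=> s Hs; have [_ Hu Hsub] := paths_sound Hs.
  rewrite /= Hu andbT; apply/negP => /Hsub; by rewrite setD11.
apply: (@le_trans _ _ (\sum_(s <- paths m A) mu_sub mu (path_edges (x :: s)))).
  apply: fiber.
    move=> s Hs; rewrite /mu_sub; apply: prodr_ge0 => e.
    rewrite path_edgesE inE => He; apply: Hmu; exact: (pe_edge (Hux s Hs) He).
  by move=> E /andP [H1 H2]; exact: surj.
have -> : \sum_(s <- paths m A) mu_sub mu (path_edges (x :: s)) = G mu m A x.
  rewrite /G big_seq [RHS]big_seq; apply: eq_bigr => s Hs.
  rewrite /mu_sub path_edgesE (big_uniq _ (pe_uniq (Hux s Hs))).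
  by apply: eq_bigl => e; rewrite inE.
case: m Hm Hux => [|k] // Hm Hux /=.
have H := G_step_of Hmu (G_bound Hmu k) HxA.
have Hd : dd mu A x = mubar mu x.
  by rewrite /dd /mubar; apply: eq_bigl => y; rewrite in_setD1 in_setT andbT.
have HW : WW mu A = 1 - mubar mu x.
  have HT : WW mu [set: V] = 1.
    by rewrite /WW -Hsum; apply: eq_bigl => e; rewrite subsetT andbT.
  have := split_W mu (in_setT x); rewrite -/A Hd HT => ->.
  by rewrite addrAC subrr add0r.
by rewrite -HW -Hd.
Qed.
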